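(* Let $\mathcal{J}=\langle U,g,f\rangle$ satisfy the standing assumptions below. For every evaluation $\mu\in\Delta(\mathbb{R}_+)$, every $t\geq0$ and every $y_0\in\mathbb{R}^d$, $$V_\mu(y_0)\leq V_{\mathcal{T}_t\sharp\mu}(y_0)+2\,TV_t(\mu).$$
   Context: Setting: $U$ is a metric space, $g:\mathbb{R}^d\times U\to[0,1]$ is Borel measurable, $f:\mathbb{R}^d\times U\to\mathbb{R}^d$ is Borel measurable with $\|f(y,u)-f(\bar y,u)\|\leq L\|y-\bar y\|$ and $\|f(y,u)\|\leq a(1+\|y\|)$ for constants $L\ge0,a>0$. $\mathcal{U}$ is the set of measurable controls $u:[0,+\infty)\to U$; $y(t,u,y_0)$ is the solution of $y'=f(y,u)$, $y(0)=y_0$. $V_\mu(y_0)=\inf_{u\in\mathcal{U}}\int_{[0,+\infty)} g(y(s,u,y_0),u(s))\,d\mu(s)$; $V_{\mathcal{T}_t\sharp\mu}(y_0)=\inf_{u\in\mathcal{U}}\int_{[0,+\infty)} g(y(s+t,u,y_0),u(s+t))\,d\mu(s)$. $TV_t(\mu)=\sup_{Q\in\mathcal{B}(\mathbb{R}_+)}|\mu(Q)-\mu(Q+t)|$. *)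

(* Defs.v *)
From HB Require Import structures.
From mathcomp Require Import all_boot all_order all_algebra.
From mathcomp Require Import all_classical all_reals all_analysis.
Set Implicit Arguments. Unset Strict Implicit. Unset Printing Implicit Defensive.
Import Order.TTheory GRing.Theory Num.Theory.
Import numFieldNormedType.Exports.
Local Open Scope classical_set_scope.
Local Open Scope ring_scope.

Definition borel_set (T : topologicalType) : set (set T) := <<s open >>.

Definition borel_fun (T1 T2 : topologicalType) (h : T1 -> T2) : Prop :=
  forall B : set T2, borel_set B -> borel_set (h @^-1` B).

Definition control (R : realType) (U : topologicalType) (u : R -> U) : Prop :=
  forall B : set U, borel_set B ->
    measurable (`[0%R, +oo[%classic `&` u @^-1` B).

Definition trajectory (R : realType) (d : nat) (U : Type)
  (f : 'rV[R]_d -> U -> 'rV[R]_d) (u : R -> U) (y0 : 'rV[R]_d)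
  (y : R -> 'rV[R]_d) : Prop :=
  forall t : R, 0 <= t -> forall i : 'I_d,
    (@lebesgue_measure R).-integrable `[0, t] (fun s => ((f (y s) (u s)) 0 i)%:E)
    /\ y t 0 i = y0 0 i + Rintegral (@lebesgue_measure R) `[0, t]
                                  (fun s => (f (y s) (u s)) 0 i).

Definition V_mu (R : realType) (d : nat) (U : topologicalType)
  (g : 'rV[R]_d -> U -> R) (f : 'rV[R]_d -> U -> 'rV[R]_d)
  (mu : set R -> \bar R) (y0 : 'rV[R]_d) : \bar R :=
  ereal_inf [set x | exists u y, control u /\ trajectory f u y0 y /\
     x = (\int[mu]_(s in `[0%R, +oo[) (g (y s) (u s))%:E)%E].

(* V_{T_t # mu}(y0) = inf_u \int_[0,+oo) g(y(s+t,u,y0), u(s+t)) dmu(s) *)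
Definition V_shift (R : realType) (d : nat) (U : topologicalType)
  (g : 'rV[R]_d -> U -> R) (f : 'rV[R]_d -> U -> 'rV[R]_d)
  (mu : set R -> \bar R) (t : R) (y0 : 'rV[R]_d) : \bar R :=
  ereal_inf [set x | exists u y, control u /\ trajectory f u y0 y /\
     x = (\int[mu]_(s in `[0%R, +oo[) (g (y (s + t)) (u (s + t)))%:E)%E].

Definition TV (R : realType) (mu : set R -> \bar R) (t : R) : \bar R :=
  ereal_sup [set x | exists Q : set R, measurable Q /\ Q `<=` `[0%R, +oo[ /\
     x = (`| mu Q - mu [set (q + t)%R | q in Q] |)%E].

(* Main.v *)
Require Import Defs.
From HB Require Import structures.
From mathcomp Require Import all_boot all_order all_algebra.
From mathcomp Require Import all_classical all_reals all_analysis.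
From mathcomp Require Import lra.
Import Order.TTheory GRing.Theory Num.Theory.
Import numFieldNormedType.Exports.
Local Open Scope classical_set_scope.
Local Open Scope ring_scope.
Set Implicit Arguments. Unset Strict Implicit.
Local Open Scope ereal_scope.

Import HBNNSimple.
Section psi.
Context (R : realType) (phi : {nnsfun R >-> R}) (t : R).
Definition psif (s : R) : R := (phi (s + t) * \1_(`[0%R, +oo[%classic : set R) s)%R.
Lemma psif_meas : measurable_fun setT psif.
Proof.
apply: measurable_realfun.measurable_funM.
  apply: measurableT_comp => //; exact: measurable_realfun.measurable_funD.
apply: measurable_realfun.measurable_indic; exact: measurable_itv.
Qed.
Lemma psif_fin : finite_set (range psif).
Proof.
apply: (@sub_finite_set _ _ (0%R |` range phi)).
  move=> _ [s _ <-]; rewrite /psif indicE; case: (_ \in _); rewrite ?mulr1 ?mulr0.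
    by right; exists (s + t)%R.
  by left.
rewrite finite_setU; split; [exact: finite_set1 | exact: fimfunP].
Qed.
Lemma psif_ge0 x : (0 <= psif x)%R.
Proof. by rewrite /psif indicE; case: (_ \in _); rewrite ?mulr1 ?mulr0. Qed.
HB.instance Definition _ := isMeasurableFun.Build _ _ _ _ psif psif_meas.
HB.instance Definition _ := FiniteImage.Build _ _ psif psif_fin.
HB.instance Definition _ := isNonNegFun.Build _ _ psif psif_ge0.
Definition psi : {nnsfun R >-> R} := psif.
End psi.

Section tv.
Context (R : realType) (mu : probability R R).
Hypothesis Hmu : mu `[0%R, +oo[%classic = 1%E.
Variable t : R.
Hypothesis Ht : (0 <= t)%R.

Local Notation D := (`[0%R, +oo[%classic : set R).

Lemma inD (x : R) : D x <-> (0 <= x)%R.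
Proof. by rewrite /= in_itv /= andbT. Qed.

Lemma TV_ge0 : 0 <= TV mu t.
Proof.
apply: ereal_sup_ubound; exists set0; split => //; split => //.
by rewrite image_set0 measure0 subee // abse0.
Qed.

Lemma TV_ub (Q : set R) : measurable Q -> Q `<=` D ->
  `| mu Q - mu [set (q + t)%R | q in Q] | <= TV mu t.
Proof. by move=> mQ QD; apply: ereal_sup_ubound; exists Q. Qed.

Lemma fmu (A : set R) : measurable A -> mu A = (fine (mu A))%:E.
Proof. by move=> mA; rewrite fineK // fin_num_measure. Qed.

Definition Bof (A : set R) := [set s | (0 <= s)%R /\ A (s + t)%R].

Lemma Bof_meas A : measurable A -> measurable (Bof A).
Proof.
move=> mA.
have -> : Bof A = D `&` ((fun s => s + t)%R @^-1` A).
  by apply/seteqP; split => s /=; rewrite in_itv /= andbT.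
have mf : measurable_fun setT (fun s : R => s + t)%R.
  exact: measurable_realfun.measurable_funD.
apply: measurableI; first exact: measurable_itv.
by rewrite -[X in measurable X]setTI; apply: mf.
Qed.

Lemma Bof_shift A : A `<=` D ->
  [set (q + t)%R | q in Bof A] = A `&` `[t, +oo[%classic.
Proof.
move=> AD; apply/seteqP; split => x /=.
  move=> [q [q0 Aq] <-]; split => //; rewrite in_itv /= andbT.
  by rewrite lerDr.
move=> [Ax]; rewrite in_itv /= andbT => tx; exists (x - t)%R.
  by split; [rewrite subr_ge0 | rewrite subrK].
by rewrite subrK.
Qed.

Lemma L1 (A : set R) (tau : R) : measurable A -> A `<=` D -> TV mu t = tau%:E ->
  mu A <= mu (Bof A) + (2 * tau)%:E.
Proof.
move=> mA AD TVt.
have mDt : measurable (`[t, +oo[%classic : set R) by exact: measurable_itv.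
have mD : measurable D by exact: measurable_itv.
have mB := Bof_meas mA.
have eB := Bof_shift AD.
have BD : Bof A `<=` D by move=> s [s0 _]; apply/inD.
have h1 := TV_ub mB BD; rewrite eB TVt in h1.
have eD : [set (q + t)%R | q in D] = `[t, +oo[%classic.
  have -> : D = Bof D.
    apply/seteqP; split => s /=; rewrite !in_itv /= !andbT.
      move=> s0; split => //; apply/inD; exact: addr_ge0.
    by case.
  by rewrite Bof_shift // setIidr // => s /=; rewrite !in_itv /= !andbT => ts; exact: le_trans Ht ts.
have h2 := TV_ub mD (@subset_refl _ D); rewrite eD TVt Hmu in h2.
rewrite (measureDI _ mA mDt).
have h3 : mu (A `\` `[t, +oo[%classic) <= mu (D `\` `[t, +oo[%classic).
  apply: le_measure; rewrite ?inE; try exact: measurableD.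
  by move=> x [Ax nx]; split => //; apply: AD.
have mDf : mu D < +oo by rewrite Hmu ltry.
have eDD : mu (D `\` `[t, +oo[%classic) = 1 - mu `[t, +oo[%classic.
  rewrite measureD // setIidr; first by congr (_ - _); exact: Hmu.
  by move=> s /=; rewrite !in_itv /= !andbT => ts; exact: le_trans Ht ts.
rewrite eDD in h3.
have mAD : measurable (A `\` `[t, +oo[%classic) by exact: measurableD.
have mAI : measurable (A `&` `[t, +oo[%classic) by exact: measurableI.
move: h1 h2 h3.
rewrite (fmu mAD) (fmu mAI) (fmu mB) (fmu mDt) -!EFinB -!EFinD !abse_EFin !lee_fin !ler_norml.
move=> /andP[h1 h1'] /andP[h2 h2'] h3.
rewrite [X in (X + _ <= _)]fmu; last by apply: measurableD.
rewrite [X in (_ + X <= _)]fmu; last by apply: measurableI.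
rewrite -EFinD lee_fin.
lra.
Qed.

Lemma L2 (phi : {nnsfun R >-> R}) (tau : R) :
  (forall x, (phi x <= 1)%R) -> (forall x, phi x != 0%R -> (0 <= x)%R) ->
  TV mu t = tau%:E ->
  sintegral mu phi <= sintegral mu (psi phi t) + (2 * tau)%:E.
Proof.
move=> phi1 phiD TVt.
pose A x := phi @^-1` [set x].
have mA x : measurable (A x) by apply: measurable_funPTI; exact: measurable_set1.
pose S := [set x | range phi x /\ x != 0%R].
have finS : finite_set S.
  by apply: (sub_finite_set _ (fimfunP phi)) => x [].
have Spos x : S x -> (0 < x <= 1)%R.
  move=> [[s _ <-] nz]; rewrite phi1 andbT lt_def nz /=; exact: fun_ge0.
have ADx x : S x -> A x `<=` D.
  by move=> [_ nz] s /= ex; apply/inD; apply: phiD; rewrite ex.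
have e1 : sintegral mu phi = \sum_(x \in S) x%:E * mu (A x).
  rewrite sintegralET; apply/esym/fsbig_widen => //.
  move=> x [_ /= nS]; have [->|nz] := eqVneq x 0%R; first by rewrite mul0e.
  suff -> : A x = set0 by rewrite measure0 mule0.
  apply/seteqP; split => // s /= ex; apply: nS; split => //; by exists s.
have e2 : sintegral mu (psi phi t) = \sum_(x \in S) x%:E * mu (Bof (A x)).
  rewrite sintegralET.
  transitivity (\sum_(x \in S) x%:E * mu (psi phi t @^-1` [set x])).
    apply/esym/fsbig_widen => //.
    move=> x [_ /= nS]; have [->|nz] := eqVneq x 0%R; first by rewrite mul0e.
    suff -> : (psi phi t) @^-1` [set x] = set0 by rewrite measure0 mule0.
    apply/seteqP; split => // s /=; rewrite /psif indicE.
    case: (_ \in _); rewrite ?mulr1 ?mulr0 => ex; last by move: nz; rewrite -ex eqxx.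
    by apply: nS; split => //; exists (s + t)%R.
  apply: eq_fsbigr => x /[!inE] -[_ nz]; congr (_ * mu _).
  apply/seteqP; split => s /=; rewrite /psif indicE.
    case: (boolP (_ \in _)); rewrite ?mulr1 ?mulr0 => sD ex; last by move: nz; rewrite -ex eqxx.
    by split => //; move: sD; rewrite inE => /inD.
  by move=> [s0 ex]; rewrite mem_set ?mulr1 //; apply/inD.
pose a x := fine (mu (A x)).
pose b x := fine (mu (Bof (A x))).
have mB x : measurable (Bof (A x)) by apply: Bof_meas.
have e1' : \sum_(x \in S) x%:E * mu (A x) = (\sum_(x \in S) (x * a x)%R)%:E.
  by rewrite -fsumEFin //; apply: eq_fsbigr => x _; rewrite [in LHS]fmu // EFinM.
have e2' : \sum_(x \in S) x%:E * mu (Bof (A x)) = (\sum_(x \in S) (x * b x)%R)%:E.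
  by rewrite -fsumEFin //; apply: eq_fsbigr => x _; rewrite [in LHS]fmu // EFinM.
rewrite e1 e2 e1' e2' -EFinD lee_fin.
pose P' := [set x | (b x < a x)%R].
have finSP : finite_set (S `&` P') by apply: (sub_finite_set _ finS) => x [].
have KEY : (\sum_(x \in S `&` P') a x <= \sum_(x \in S `&` P') b x + 2 * tau)%R.
  pose AA := \bigcup_(x in S `&` P') A x.
  have mAA : measurable AA by apply: fin_bigcup_measurable.
  have AAD : AA `<=` D by move=> s [x [Sx _] Axs]; exact: (ADx x Sx).
  have eA : mu AA = (\sum_(x \in S `&` P') a x)%:E.
    rewrite measure_fin_bigcup //; last exact: trivIset_preimage1.
    rewrite -fsumEFin //; by apply: eq_fsbigr => x _; exact: (fmu (mA x)).
  have eBA : Bof AA = \bigcup_(x in S `&` P') Bof (A x).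
    apply/seteqP; split => s /=.
      by move=> [s0 [x SPx Ax]]; exists x.
    by move=> [x SPx [s0 Ax]]; split => //; exists x.
  have eB : mu (Bof AA) = (\sum_(x \in S `&` P') b x)%:E.
    rewrite eBA measure_fin_bigcup //.
      by rewrite -fsumEFin //; apply: eq_fsbigr => x _; exact: (fmu (mB x)).
    move=> i j _ _ [s [[_ /= ei] [_ /= ej]]]; by rewrite -ei -ej.
  have := L1 mAA AAD TVt.
  by rewrite eA eB -EFinD lee_fin.
rewrite (fsbig_mkcondr _ S P') (fsbig_mkcondr _ S P') !fsbig_finite // in KEY.
rewrite !fsbig_finite //.
have le1 : (\sum_(x <- finmap.enum_fset (fset_set S)) (x * a x)%R <= \sum_(x <- finmap.enum_fset (fset_set S)) (x * b x + ((if x \in P' then a x else 0) - (if x \in P' then b x else 0)))%R)%R.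
  rewrite big_seq [leRHS]big_seq; apply: ler_sum => x.
  rewrite in_fset_set // inE => /Spos /andP[x0 x1].
  have [h|h] := ltP (b x) (a x).
    rewrite (mem_set (h : P' x)); nra.
  rewrite memNset; last by rewrite /P' /= ltNge h.
  nra.
rewrite big_split /= sumrB in le1; lra.
Qed.

Lemma L3 (F : R -> R) : (forall s, (0 <= F s <= 1)%R) ->
  \int[mu]_(s in D) (F s)%:E <= \int[mu]_(s in D) (F (s + t)%R)%:E + 2%:E * TV mu t.
Proof.
move=> F01.
have i0 : 0 <= \int[mu]_(s in D) (F (s + t)%R)%:E.
  by apply: integral_ge0 => s _; rewrite lee_fin; case/andP: (F01 (s + t)%R).
case E : (TV mu t) => [tau| |]; last first.
- by have := TV_ge0; rewrite E.
- rewrite mulry gtr0_sg // mul1e addey ?leey //.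
  by apply: contraTN i0 => /eqP ->; rewrite -ltNge ltNy0.
rewrite -EFinM.
rewrite ge0_integralE; last by move=> s _; rewrite lee_fin; case/andP: (F01 s).
rewrite ge0_integralE; last by move=> s _; rewrite lee_fin; case/andP: (F01 (s + t)%R).
apply: ge_ereal_sup => _ [phi hphi <-].
have phi1 x : (phi x <= 1)%R.
  have := hphi x; rewrite patchE; case: (_ \in _); rewrite lee_fin => h.
    by apply: le_trans h _; case/andP: (F01 x).
  by apply: le_trans h _.
have phiD x : phi x != 0%R -> (0 <= x)%R.
  move=> nz; have := hphi x; rewrite patchE; case: (boolP (_ \in _)).
    by rewrite inE => /inD.
  move=> _; rewrite lee_fin => h; move: nz; rewrite eq_le h /=.
  by rewrite fun_ge0.
apply: le_trans (L2 phi1 phiD E) _.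
rewrite leeD2r //; apply: ereal_sup_ubound; exists (psi phi t) => //.
move=> x; rewrite patchE /= /psif indicE; case: (boolP (_ \in _)) => xD.
  rewrite mulr1; have := hphi (x + t)%R; rewrite patchE.
  have xtD : (x + t)%R \in D.
    by apply/mem_set/inD; apply: addr_ge0 => //; exact/inD/set_mem.
  by rewrite xtD.
by rewrite mulr0.
Qed.
End tv.


Local Close Scope ereal_scope.
Unset Implicit Arguments.
Set Strict Implicit.

Theorem mainTheorem11 (R : realType) (d : nat) (U : pseudoMetricType R)
  (g : 'rV[R]_d -> U -> R) (f : 'rV[R]_d -> U -> 'rV[R]_d) (L a : R)
  (HU : hausdorff_space U)
  (Hg01 : forall y u, 0 <= g y u <= 1)
  (Hgm : borel_fun (fun p : 'rV[R]_d * U => g p.1 p.2))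
  (Hfm : borel_fun (fun p : 'rV[R]_d * U => f p.1 p.2))
  (HL : 0 <= L) (Ha : 0 < a)
  (Hlip : forall (y ybar : 'rV[R]_d) (u : U), `|f y u - f ybar u| <= L * `|y - ybar|)
  (Hgrowth : forall (y : 'rV[R]_d) (u : U), `|f y u| <= a * (1 + `|y|))
  (mu : probability R R) (Hmu : mu `[0%R, +oo[%classic = 1%E)
  (t : R) (Ht : 0 <= t) (y0 : 'rV[R]_d) :
  (V_mu g f mu y0 <= V_shift g f mu t y0 + 2%:E * TV mu t)%E.
Proof.
have Hg0 : forall s : R, forall (y : R -> 'rV[R]_d) (u : R -> U), (0 <= g (y s) (u s) <= 1)%R.
  by move=> s y u; exact: Hg01.
have key : forall x, [set x | exists u y, control u /\ trajectory f u y0 y /\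
     x = (\int[mu]_(s in `[0%R, +oo[) (g (y (s + t)) (u (s + t)))%:E)%E] x ->
    (V_mu g f mu y0 <= x + 2%:E * TV mu t)%E.
  move=> _ [u [y [cu [tr ->]]]].
  have h := @L3 R mu Hmu t Ht (fun s => g (y s) (u s)) (fun s => Hg0 s y u).
  have h2 : (V_mu g f mu y0 <= \int[mu]_(s in `[0%R, +oo[) (g (y s) (u s))%:E)%E.
    by apply: ereal_inf_lbound; exists u, y.
  apply: (le_trans h2).
  exact: h.
have Vs0 : (0 <= V_shift g f mu t y0)%E.
  apply: le_ereal_inf_tmp => _ [u [y [_ [_ ->]]]].
  by apply: integral_ge0 => s _; rewrite lee_fin; case/andP: (Hg01 (y (s + t)) (u (s + t))).
case E : (TV mu t) => [tau| |]; last first.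
- by have := TV_ge0 mu t; rewrite E.
- rewrite mulry gtr0_sg // mul1e addey ?leey //.
  by apply: contraTN Vs0 => /eqP ->; rewrite -ltNge ltNy0.
rewrite -EFinM -leeBlDr //; apply: le_ereal_inf_tmp => x Sx.
by rewrite leeBlDr // EFinM -E; apply: key.
Qed.
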